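(* Every partial field is global: if $F$ is a partial field, then $F$ is isomorphic to $\Gamma(\mathrm{Spec}(F))=\mathcal{O}_X(X)$ where $(X,\mathcal{O}_X)=\mathrm{Spec}(F)$.
   Context: A partial ring is a set with $0$, a set of summable pairs and a commutative, unital, associative (in the sense: $(a,b),(a+b,c)$ summable iff $(b,c),(a,b+c)$ summable, and then $(a+b)+c=a+(b+c)$) partial addition, together with a commutative associative multiplication with unit $1$ such that $0\cdot a=0$ and multiplication distributes over summable pairs (if $(a_1,a_2)$ is summable then so is $(a_1x,a_2x)$ and $(a_1+a_2)x=a_1x+a_2x$). A partial field is a partial ring in which every nonzero element has a multiplicative inverse. For a partial ring $A$, $X_A$ is the set of prime ideals with the topology generated by $D(a)=\{\mathfrak p: a\notin\mathfrak p\}$; for open $U$, $S_U=\{a: a\notin\mathfrak p\ \forall \mathfrak p\in U\}$, and $\mathcal{O}_X$ is the sheafification of $U\mapsto S_U^{-1}A$ (localization: classes $a/s$ with $a/s=b/t$ iff $uta=usb$ for some $u\in S_U$). $\mathrm{Spec}(A)=(X_A,\mathcal{O}_X)$. A partial ring is global if it is isomorphic to $\Gamma(X,\mathcal{O})=\mathcal{O}(X)$ for some affine partial scheme $(X,\mathcal{O})$, i.e. a locally partial-ringed space isomorphic to $\mathrm{Spec}(A)$ for some partial ring $A$. *)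

(* Defs.v *)
From Stdlib Require Import List.
Import ListNotations.
Set Implicit Arguments.

(* Raw data of a partial ring: carrier, 0, 1, the summability relation,
   the (partial) addition (only meaningful on summable pairs) and the
   multiplication. *)
Record PRData := {
  car :> Type;
  pzero : car;
  pone : car;
  summ : car -> car -> Prop;
  padd : car -> car -> car;
  pmul : car -> car -> car
}.

Arguments pzero {_}.
Arguments pone {_}.
Arguments summ {_}.
Arguments padd {_}.
Arguments pmul {_}.

Definition is_partial_ring (R : PRData) : Prop :=
  (forall a b : R, summ a b -> summ b a /\ padd a b = padd b a) /\
  (forall a : R, summ a pzero /\ padd a pzero = a) /\
  (forall a b c : R,
     (summ a b /\ summ (padd a b) c) <-> (summ b c /\ summ a (padd b c))) /\
  (forall a b c : R, summ a b -> summ (padd a b) c ->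
     padd (padd a b) c = padd a (padd b c)) /\
  (forall a b : R, pmul a b = pmul b a) /\
  (forall a b c : R, pmul (pmul a b) c = pmul a (pmul b c)) /\
  (forall a : R, pmul pone a = a) /\
  (forall a : R, pmul pzero a = pzero) /\
  (forall a1 a2 x : R, summ a1 a2 ->
     summ (pmul a1 x) (pmul a2 x) /\
     pmul (padd a1 a2) x = padd (pmul a1 x) (pmul a2 x)).

Definition is_partial_field (R : PRData) : Prop :=
  is_partial_ring R /\
  (forall a : R, a <> pzero -> exists b : R, pmul a b = pone).

Definition is_ideal (R : PRData) (I : R -> Prop) : Prop :=
  I pzero /\
  (forall a b : R, I a -> I b -> summ a b -> I (padd a b)) /\
  (forall a x : R, I a -> I (pmul a x)).

Definition is_prime (R : PRData) (P : R -> Prop) : Prop :=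
  is_ideal R P /\ ~ P pone /\
  (forall a b : R, P (pmul a b) -> P a \/ P b).

Definition Pt (R : PRData) := { P : R -> Prop | is_prime R P }.

Definition Dopen (R : PRData) (a : R) : Pt R -> Prop :=
  fun p => ~ proj1_sig p a.

(* the topology generated by the D(a): unions of finite intersections *)
Definition is_open (R : PRData) (U : Pt R -> Prop) : Prop :=
  forall p, U p -> exists l : list R,
    (forall x, In x l -> Dopen x p) /\
    (forall q, (forall x, In x l -> Dopen x q) -> U q).

Definition SU (R : PRData) (U : Pt R -> Prop) (a : R) : Prop :=
  forall p, U p -> ~ proj1_sig p a.

(* equality a/s = b/t in S_U^{-1} R *)
Definition loc_eq (R : PRData) (U : Pt R -> Prop) (a s b t : R) : Prop :=
  exists u, SU U u /\ pmul u (pmul t a) = pmul u (pmul s b).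

(* a representative (V, a/s) of a germ: a/s in S_V^{-1} R *)
Record germ (R : PRData) := mkgerm {
  gV : Pt R -> Prop;
  gnum : R;
  gden : R
}.

Definition valid_at (R : PRData) (p : Pt R) (g : germ R) : Prop :=
  is_open (gV g) /\ gV g p /\ SU (gV g) (gden g).

Definition germ_eq (R : PRData) (p : Pt R) (g h : germ R) : Prop :=
  exists Z : Pt R -> Prop, is_open Z /\ Z p /\
    (forall q, Z q -> gV g q) /\ (forall q, Z q -> gV h q) /\
    loc_eq Z (gnum g) (gden g) (gnum h) (gden h).

Definition germ_class (R : PRData) (p : Pt R) (g : germ R) : germ R -> Prop :=
  fun h => valid_at p h /\ germ_eq p g h.

Definition is_stalk_elt (R : PRData) (p : Pt R) (C : germ R -> Prop) : Prop :=
  exists g, valid_at p g /\ C = germ_class p g.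

Definition setT (R : PRData) : Pt R -> Prop := fun _ => True.

Definition stalk_zero (R : PRData) (p : Pt R) := germ_class p (mkgerm (@setT R) pzero pone).
Definition stalk_one (R : PRData) (p : Pt R) := germ_class p (mkgerm (@setT R) pone pone).

Definition stalk_mul (R : PRData) (p : Pt R) (C D : germ R -> Prop) : germ R -> Prop :=
  fun h => valid_at p h /\ exists g1 g2, C g1 /\ D g2 /\
    germ_eq p (mkgerm (fun q => gV g1 q /\ gV g2 q)
                      (pmul (gnum g1) (gnum g2)) (pmul (gden g1) (gden g2))) h.

(* summability in the stalk: represented at some stage V by a pair
   summable in S_V^{-1} R, i.e. with a common denominator and summable
   numerators *)
Definition stalk_summ (R : PRData) (p : Pt R) (C D : germ R -> Prop) : Prop :=
  exists g1 g2, C g1 /\ D g2 /\ gV g1 = gV g2 /\ gden g1 = gden g2 /\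
    summ (gnum g1) (gnum g2).

Definition stalk_add (R : PRData) (p : Pt R) (C D : germ R -> Prop) : germ R -> Prop :=
  fun h => valid_at p h /\ exists g1 g2, C g1 /\ D g2 /\ gV g1 = gV g2 /\
    gden g1 = gden g2 /\ summ (gnum g1) (gnum g2) /\
    germ_eq p (mkgerm (gV g1) (padd (gnum g1) (gnum g2)) (gden g1)) h.

(* families of stalk elements over X *)
Definition Fam (R : PRData) := Pt R -> germ R -> Prop.

(* sections of the sheafification over X: families of germs that are
   locally given by a section of the presheaf *)
Definition is_global_section (R : PRData) (sigma : Fam R) : Prop :=
  (forall p, is_stalk_elt p (sigma p)) /\
  (forall p, exists (V : Pt R -> Prop) (a s : R),
      is_open V /\ V p /\ SU V s /\
      forall q, V q -> sigma q (mkgerm V a s)).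

Definition Fam_data (R : PRData) : PRData := {|
  car := Fam R;
  pzero := fun p => stalk_zero p;
  pone := fun p => stalk_one p;
  summ := fun s t => forall p, stalk_summ p (s p) (t p);
  padd := fun s t p => stalk_add p (s p) (t p);
  pmul := fun s t p => stalk_mul p (s p) (t p)
|}.

(* phi is an isomorphism of partial rings from A onto the sub-structure of
   B carried by the predicate sub (here: O_X(X) inside the families) *)
Definition is_iso_onto (A B : PRData) (sub : B -> Prop) (phi : A -> B) : Prop :=
  (forall a b, phi a = phi b -> a = b) /\
  (forall y, sub y <-> exists a, phi a = y) /\
  phi pzero = pzero /\ phi pone = pone /\
  (forall a b, phi (pmul a b) = pmul (phi a) (phi b)) /\
  (forall a b, summ a b <-> summ (phi a) (phi b)) /\
  (forall a b, summ a b -> phi (padd a b) = padd (phi a) (phi b)).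

(* Main.v *)
Require Import Defs.
From Stdlib Require Import List Classical ClassicalEpsilon FunctionalExtensionality PropExtensionality.
Import ListNotations.
Set Implicit Arguments.

Lemma mulC (F : PRData) (hF : is_partial_field F) (a b : F) : pmul a b = pmul b a.
Proof. destruct hF as [[? [? [? [? [H ?]]]]] ?]. apply H. Qed.
Lemma mulA (F : PRData) (hF : is_partial_field F) (a b c : F) :
  pmul (pmul a b) c = pmul a (pmul b c).
Proof. destruct hF as [[? [? [? [? [? [H ?]]]]]] ?]. apply H. Qed.
Lemma mul1 (F : PRData) (hF : is_partial_field F) (a : F) : pmul pone a = a.
Proof. destruct hF as [[? [? [? [? [? [? [H ?]]]]]]] ?]. apply H. Qed.
Lemma mul0 (F : PRData) (hF : is_partial_field F) (a : F) : pmul pzero a = pzero.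
Proof. destruct hF as [[? [? [? [? [? [? [? [H ?]]]]]]]] ?]. apply H. Qed.
Lemma add0 (F : PRData) (hF : is_partial_field F) (a : F) : summ a pzero /\ padd a pzero = a.
Proof. destruct hF as [[? [H ?]] ?]. apply H. Qed.
Lemma distr (F : PRData) (hF : is_partial_field F) (a1 a2 x : F) : summ a1 a2 ->
     summ (pmul a1 x) (pmul a2 x) /\
     pmul (padd a1 a2) x = padd (pmul a1 x) (pmul a2 x).
Proof. destruct hF as [[? [? [? [? [? [? [? [? H]]]]]]]] ?]. apply H. Qed.

Definition finv {F : PRData} (x : F) : F :=
  epsilon (inhabits pzero) (fun y => pmul x y = pone).

Lemma finv_r (F : PRData) (hF : is_partial_field F) (x : F) :
  x <> pzero -> pmul x (finv x) = pone.
Proof.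
  intro H. destruct hF as [_ Hi]. destruct (Hi x H) as [y Hy].
  unfold finv. apply (epsilon_spec (inhabits pzero) (fun y => pmul x y = pone)).
  exists y; exact Hy.
Qed.

Lemma finv_l (F : PRData) (hF : is_partial_field F) (x : F) :
  x <> pzero -> pmul (finv x) x = pone.
Proof. intro H. rewrite (mulC hF). apply finv_r; auto. Qed.

Lemma cancel (F : PRData) (hF : is_partial_field F) {t x y : F} :
  t <> pzero -> pmul t x = pmul t y -> x = y.
Proof.
  intros Ht E.
  rewrite <- (mul1 hF x), <- (mul1 hF y), <- (finv_l hF Ht), !(mulA hF), E. reflexivity.
Qed.

Lemma mul_nz (F : PRData) (hF : is_partial_field F) (a b : F) :
  a <> pzero -> b <> pzero -> pmul a b <> pzero.
Proof.
  intros Ha Hb E. apply Hb. apply (cancel hF Ha). rewrite E.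
  rewrite (mulC hF), (mul0 hF). reflexivity.
Qed.

Lemma decomp (F : PRData) (hF : is_partial_field F) (s a : F) :
  s <> pzero -> a = pmul s (pmul a (finv s)).
Proof.
  intro Hs. rewrite (mulC hF a), <- (mulA hF), (finv_r hF Hs), (mul1 hF). reflexivity.
Qed.

Lemma mul4 (F : PRData) (hF : is_partial_field F) (a b c d : F) :
  pmul (pmul a b) (pmul c d) = pmul (pmul a c) (pmul b d).
Proof.
  rewrite (mulA hF), <- (mulA hF b c d), (mulC hF b c), (mulA hF c b d), <- (mulA hF a c).
  reflexivity.
Qed.

Lemma Lrel (F : PRData) (hF : is_partial_field F) (a s b t : F) :
  s <> pzero -> t <> pzero ->
  (pmul t a = pmul s b <-> pmul a (finv s) = pmul b (finv t)).
Proof.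
  intros Hs Ht.
  assert (Ea := decomp hF a Hs). assert (Eb := decomp hF b Ht).
  set (al := pmul a (finv s)) in *. set (be := pmul b (finv t)) in *.
  assert (Hts := mul_nz hF Ht Hs).
  split.
  - intro E. rewrite Ea, Eb in E. rewrite <- !(mulA hF) in E.
    rewrite (mulC hF s t) in E. exact (cancel hF Hts E).
  - intro E. rewrite Ea, Eb, <- !(mulA hF), (mulC hF s t), E. reflexivity.
Qed.

Lemma L0 (F : PRData) (hF : is_partial_field F) (p : Pt F) (x : F) :
  proj1_sig p x <-> x = pzero.
Proof.
  destruct p as [P [[H0 [Hadd Hmul]] [H1 Hpr]]]; simpl. split.
  - intro Hx. destruct (classic (x = pzero)) as [e|n]; auto.
    exfalso. apply H1. rewrite <- (finv_r hF n). apply Hmul; auto.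
  - intro e; subst; auto.
Qed.

Lemma pt_nontriv (F : PRData) (hF : is_partial_field F) (p : Pt F) : pone <> (pzero : F).
Proof. intro e. apply (L0 hF p pone) in e. destruct p as [P HP]. simpl in e. destruct HP as [_ [H1 _]]. auto. Qed.

Lemma Lall (F : PRData) (hF : is_partial_field F) {V : Pt F -> Prop} {p : Pt F} :
  is_open V -> V p -> forall q, V q.
Proof.
  intros Ho Hp q. destruct (Ho p Hp) as [l [H1 H2]]. apply H2.
  intros x Hx. specialize (H1 x Hx). unfold Dopen in *.
  rewrite (L0 hF) in *. exact H1.
Qed.

Lemma Lopen (F : PRData) (V : Pt F -> Prop) : (forall q, V q) -> is_open V.
Proof. intros H p _. exists nil. split; [intros x [] | intros; apply H]. Qed.

Lemma SU_nz (F : PRData) (hF : is_partial_field F) {V} {p : Pt F} {a} :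
  SU V a -> V p -> a <> pzero.
Proof. intros H Hp e. apply (H p Hp). apply (L0 hF). exact e. Qed.

Lemma nz_SU (F : PRData) (hF : is_partial_field F) V (a : F) :
  a <> pzero -> SU V a.
Proof. intros H p _ Hp. apply H. apply (L0 hF p). exact Hp. Qed.

Definition val {F : PRData} (g : germ F) : F := pmul (gnum g) (finv (gden g)).

Lemma valid_iff (F : PRData) (hF : is_partial_field F) (p : Pt F) (g : germ F) :
  valid_at p g <-> ((forall q, gV g q) /\ gden g <> pzero).
Proof.
  split.
  - intros [Ho [Hp Hs]]. split. apply (Lall hF Ho Hp). apply (SU_nz hF Hs Hp).
  - intros [Ha Hd]. split; [apply Lopen; auto | split; auto]. apply (nz_SU hF); auto.
Qed.

Lemma geq_iff (F : PRData) (hF : is_partial_field F) (p : Pt F) (g h : germ F) :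
  valid_at p g -> valid_at p h -> (germ_eq p g h <-> val g = val h).
Proof.
  intros Vg Vh. apply (valid_iff hF) in Vg. apply (valid_iff hF) in Vh.
  destruct Vg as [Ag Dg]. destruct Vh as [Ah Dh]. unfold val. split.
  - intros [Z [Zo [Zp [_ [_ [u [Hu E]]]]]]].
    apply (cancel hF (SU_nz hF Hu Zp)) in E. apply (Lrel hF _ _ Dg Dh). exact E.
  - intro E. exists (@setT F). split; [apply Lopen; now intro|].
    split; [exact I|]. split; [intros; apply Ag|]. split; [intros; apply Ah|].
    exists pone. split.
    + apply (nz_SU hF). exact (pt_nontriv hF p).
    + rewrite !(mul1 hF). apply (Lrel hF _ _ Dg Dh). exact E.
Qed.

Lemma class_mem (F : PRData) (hF : is_partial_field F) (p : Pt F) (g h : germ F) :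
  valid_at p g -> (germ_class p g h <-> (valid_at p h /\ val g = val h)).
Proof.
  intros Vg. unfold germ_class. split; intros [Vh E]; split; auto;
  apply (geq_iff hF Vg Vh); auto.
Qed.

Lemma class_eq (F : PRData) (hF : is_partial_field F) (p : Pt F) (g h : germ F) :
  valid_at p g -> valid_at p h -> val g = val h -> germ_class p g = germ_class p h.
Proof.
  intros Vg Vh E. apply functional_extensionality; intro k.
  apply propositional_extensionality.
  rewrite (class_mem hF k Vg), (class_mem hF k Vh), E. tauto.
Qed.

Definition gc {F : PRData} (c : F) : germ F := mkgerm (@setT F) c pone.


Lemma gc_valid (F : PRData) (hF : is_partial_field F) (p : Pt F) (c : F) : valid_at p (gc c).
Proof. apply (valid_iff hF). split; [intro; exact I|]. apply (pt_nontriv hF p). Qed.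

Lemma finv1 (F : PRData) (hF : is_partial_field F) : pone <> (pzero : F) -> finv (pone : F) = pone.
Proof. intro H. rewrite <- (mul1 hF (finv pone)). apply (finv_r hF H). Qed.

Lemma gc_val (F : PRData) (hF : is_partial_field F) (p : Pt F) (c : F) : val (gc c) = c.
Proof.
  unfold val, gc; simpl. rewrite (finv1 hF (pt_nontriv hF p)), (mulC hF), (mul1 hF). reflexivity.
Qed.

Lemma gc_mem (F : PRData) (hF : is_partial_field F) (p : Pt F) (c : F) (h : germ F) :
  germ_class p (gc c) h <-> (valid_at p h /\ val h = c).
Proof.
  rewrite (class_mem hF h (gc_valid hF p c)), (gc_val hF p). split; intros [? ?]; auto.
Qed.

Lemma val_mul (F : PRData) (hF : is_partial_field F) (a b s t : F) :
  s <> pzero -> t <> pzero ->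
  pmul (pmul a b) (finv (pmul s t)) = pmul (pmul a (finv s)) (pmul b (finv t)).
Proof.
  intros Hs Ht.
  assert (E : finv (pmul s t) = pmul (finv s) (finv t)).
  { apply (cancel hF (mul_nz hF Hs Ht)). rewrite (finv_r hF (mul_nz hF Hs Ht)).
    rewrite (mul4 hF), (finv_r hF Hs), (finv_r hF Ht), (mul1 hF). reflexivity. }
  rewrite E, (mul4 hF). reflexivity.
Qed.

Lemma pt0_prime (F : PRData) (hF : is_partial_field F) : pone <> (pzero : F) ->
  is_prime F (fun a => a = pzero).
Proof.
  intro H10. split; [split; [reflexivity|split]|split; auto].
  - intros a b -> -> _. apply (add0 hF).
  - intros a x ->. apply (mul0 hF).
  - intros a b E. destruct (classic (a = pzero)) as [e|n]; auto. right.
    apply (cancel hF n). rewrite E, (mulC hF), (mul0 hF). reflexivity.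
Qed.

Theorem mainTheorem13 (F : PRData) (hF : is_partial_field F) :
  exists phi : F -> Fam_data F,
    @is_iso_onto F (Fam_data F) (@is_global_section F) phi.
Proof.
  destruct (classic (pone = (pzero : F))) as [H10 | H10].
  -
    assert (Hall : forall x : F, x = pzero).
    { intro x. rewrite <- (mul1 hF x), H10, (mul0 hF). reflexivity. }
    assert (Hno : Pt F -> False).
    { intro p. exact (pt_nontriv hF p H10). }
    assert (Hfam : forall y z : Fam_data F, y = z).
    { intros y z. apply functional_extensionality. intro p. destruct (Hno p). }
    exists (fun _ => fun _ _ => False).
    split; [intros a b _; rewrite (Hall a), (Hall b); reflexivity|].
    split; [intro y; split; [intros _; exists pzero; apply Hfam|intros _; split; intro p; destruct (Hno p)]|].
    split; [apply Hfam|]. split; [apply Hfam|]. split; [intros; apply Hfam|].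
    split; [intros a b; split; [intros _ p; destruct (Hno p)|intros _; rewrite (Hall a), (Hall b); apply (add0 hF)]|].
    intros; apply Hfam.
  - set (p0 := exist _ (fun a : F => a = pzero) (pt0_prime hF H10) : Pt F).
    exists (fun c : F => fun p => germ_class p (gc c)).
    split.
    { intros a b E. assert (E' := f_equal (fun f => f p0 (gc a)) E). simpl in E'.
      assert (M : germ_class p0 (gc a) (gc a)) by (apply (gc_mem hF); split; [apply gc_valid; auto| apply (gc_val hF p0)]).
      rewrite E' in M. apply (gc_mem hF) in M. destruct M as [_ M].
      rewrite (gc_val hF p0) in M. auto. }
    split.
    { intro y. split.
      - intros [Hst Hloc]. destruct (Hloc p0) as [V [a [s [Vo [Vp [Vs Hy]]]]]].
        exists (val (mkgerm V a s)). apply functional_extensionality. intro q.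
        destruct (Hst q) as [g [Vg Eg]]. rewrite Eg.
        assert (Vq : valid_at q (mkgerm V a s)).
        { split; auto. split; auto. apply (Lall hF Vo Vp). }
        assert (M := Hy q (Lall hF Vo Vp q)). rewrite Eg in M.
        apply (class_mem hF _ Vg) in M. destruct M as [_ M].
        apply (class_eq hF (gc_valid hF q _) Vg).
        rewrite (gc_val hF q). auto.
      - intros [c <-]. split.
        + intro p. exists (gc c). split; auto. apply gc_valid; auto.
        + intro p. exists (@setT F), c, pone. split; [apply Lopen; now intro|].
          split; [exact I|]. split; [apply (nz_SU hF); auto|].
          intros q _. apply (gc_mem hF). split; [apply gc_valid; auto|apply (gc_val hF q)]. }
    split; [reflexivity|]. split; [reflexivity|].
    split.
    { intros a b. apply functional_extensionality; intro p.
      apply functional_extensionality; intro h. apply propositional_extensionality.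
      simpl. unfold stalk_mul. rewrite (gc_mem hF). split.
      - intros [Vh Eh]. split; auto. exists (gc a), (gc b).
        split; [apply (gc_mem hF); split; [apply gc_valid; auto|apply (gc_val hF p)]|].
        split; [apply (gc_mem hF); split; [apply gc_valid; auto|apply (gc_val hF p)]|].
        apply (geq_iff hF); auto.
        + apply (valid_iff hF). simpl. split; [intros; split; exact I|].
          apply mul_nz; auto.
        + unfold val; simpl. rewrite (val_mul hF _ _ H10 H10). fold (val (gc a)) (val (gc b)).
          rewrite (finv1 hF H10), (mulC hF a), (mulC hF b), !(mul1 hF). fold (val h). auto.
      - intros [Vh [g1 [g2 [M1 [M2 E]]]]]. split; auto.
        apply (gc_mem hF) in M1. apply (gc_mem hF) in M2.
        destruct M1 as [V1 E1]. destruct M2 as [V2 E2].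
        apply (valid_iff hF) in V1. apply (valid_iff hF) in V2.
        destruct V1 as [A1 D1]. destruct V2 as [A2 D2].
        apply (geq_iff hF) in E; auto.
        + rewrite <- E. unfold val; simpl. rewrite (val_mul hF _ _ D1 D2).
          fold (val g1) (val g2). rewrite E1, E2. reflexivity.
        + apply (valid_iff hF). simpl. split; [intros; split; auto|].
          apply mul_nz; auto. }
    split.
    { intros a b. simpl. split.
      - intros S p. exists (gc a), (gc b).
        split; [apply (gc_mem hF); split; [apply gc_valid; auto|apply (gc_val hF p)]|].
        split; [apply (gc_mem hF); split; [apply gc_valid; auto|apply (gc_val hF p)]|].
        simpl. auto.
      - intros S. destruct (S p0) as [g1 [g2 [M1 [M2 [EV [ED Sn]]]]]].
        apply (gc_mem hF) in M1. apply (gc_mem hF) in M2.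
        destruct M1 as [_ E1]. destruct M2 as [_ E2].
        unfold val in E1, E2. rewrite ED in E1. subst a b.
        apply (distr hF). auto. }
    { intros a b S. apply functional_extensionality; intro p.
      apply functional_extensionality; intro h. apply propositional_extensionality.
      simpl. unfold stalk_add. rewrite (gc_mem hF). split.
      - intros [Vh Eh]. split; auto. exists (gc a), (gc b).
        split; [apply (gc_mem hF); split; [apply gc_valid; auto|apply (gc_val hF p)]|].
        split; [apply (gc_mem hF); split; [apply gc_valid; auto|apply (gc_val hF p)]|].
        simpl. split; auto. split; auto. split; auto.
        apply (geq_iff hF); auto.
        + apply gc_valid. exact hF.
        + rewrite Eh. apply (gc_val hF p).
      - intros [Vh [g1 [g2 [M1 [M2 [EV [ED [Sn E]]]]]]]]. split; auto.
        apply (gc_mem hF) in M1. apply (gc_mem hF) in M2.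
        destruct M1 as [V1 E1]. destruct M2 as [V2 E2].
        assert (V1' := V1). apply (valid_iff hF) in V1'. destruct V1' as [A1 D1].
        apply (geq_iff hF) in E; auto.
        + rewrite <- E. unfold val in *; simpl. rewrite ED in *.
          rewrite (proj2 (@distr F hF _ _ (finv (gden g2)) Sn)). rewrite E1, E2. reflexivity. }
Qed.
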